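(* Let $(A,\rho,[-,-])$ be a Lie algebroid and let $\nabla^{(1)},\nabla^{(2)},\nabla^{(3)}$ be flat linear connections on $(A,\rho)$, i.e. $R_{\nabla^{(i)}}=0$ for $i=1,2,3$. Then for all $u,v,w\in\underline{\mathrm{Sec}}(A)$, $$R_{[\nabla^{(1)},\nabla^{(2)},\nabla^{(3)}]}(u,v)w=2\nabla^{(2)}_{[u,v]}w+\sum_{i\neq j}(-1)^{i+j}[\nabla^{(i)}_u,\nabla^{(j)}_v]w,$$ where $[\nabla^{(1)},\nabla^{(2)},\nabla^{(3)}]:=\nabla^{(1)}-\nabla^{(2)}+\nabla^{(3)}$, the sum runs over ordered pairs $(i,j)$ with $i,j\in\{1,2,3\}$, $i\neq j$, and $[\nabla^{(i)}_u,\nabla^{(j)}_v]w:=\nabla^{(i)}_u\nabla^{(j)}_v w-(-1)^{\widetilde u\widetilde v}\nabla^{(j)}_v\nabla^{(i)}_u w$.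
   Context: All objects are $\mathbb{Z}_2$-graded (supergeometry); the Grassmann parity of an object $x$ is denoted $\widetilde{x}\in\mathbb{Z}_2$. An anchored vector bundle is a vector bundle $\pi: A\to M$ of supermanifolds with a vector bundle homomorphism over the identity $\rho: A\to\mathsf{T}M$; it induces an even $C^\infty(M)$-module map $\rho:\underline{\mathrm{Sec}}(A)\to\mathrm{Vect}(M)$, $\rho_u:=\rho(u)$. A Lie algebroid is an anchored vector bundle together with an $\mathbb{R}$-bilinear bracket $[-,-]$ on $\underline{\mathrm{Sec}}(A)$ such that $\widetilde{[u,v]}=\widetilde u+\widetilde v$, $[u,v]=-(-1)^{\widetilde u\widetilde v}[v,u]$, $[u,fv]=\rho_u(f)v+(-1)^{\widetilde u\widetilde f}f[u,v]$, and $[u,[v,w]]=[[u,v],w]+(-1)^{\widetilde u\widetilde v}[v,[u,w]]$ for all sections $u,v,w$ and $f\in C^\infty(M)$. A linear connection on $(A,\rho)$ is an $\mathbb{R}$-bilinear map $\nabla:\underline{\mathrm{Sec}}(A)\times\underline{\mathrm{Sec}}(A)\to\underline{\mathrm{Sec}}(A)$ with $\widetilde{\nabla_u v}=\widetilde u+\widetilde v$, $\nabla_{fu}v=f\nabla_u v$, and $\nabla_u(fv)=\rho_u(f)v+(-1)^{\widetilde u\widetilde f}f\nabla_u v$. The curvature of $\nabla$ is $R_\nabla(u,v)w:=\nabla_u\nabla_v w-(-1)^{\widetilde u\widetilde v}\nabla_v\nabla_u w-\nabla_{[u,v]}w$. *)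

(* Defs.v *)
(* Algebraic (Lie–Rinehart) model of a Lie algebroid on a
   supermanifold: C plays the role of C^oo(M) (a Z2-graded supercommutative
   R-algebra), S plays the role of Sec(A) (a Z2-graded C-module); the anchor
   sends sections to graded derivations (vector fields) of C. *)
From HB Require Import structures.
From mathcomp Require Import all_boot all_order all_algebra.
From mathcomp Require Import reals.
Set Implicit Arguments. Unset Strict Implicit. Unset Printing Implicit Defensive.
Import GRing.Theory Num.Theory.
Local Open Scope ring_scope.

Definition ksign {R : pzRingType} (a b : bool) : R := (-1) ^+ (a && b).

Definition is_grading (R : pzRingType) (V : lmodType R) (hom : bool -> pred V) :=
  [/\ forall b, hom b 0,
      forall b x y, hom b x -> hom b y -> hom b (x + y),
      forall b (r : R) x, hom b x -> hom b (r *: x),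
      forall x, exists x0 x1, [/\ hom false x0, hom true x1 & x = x0 + x1]
    & forall x, hom false x -> hom true x -> x = 0].

Definition is_supercomm_algebra (R : pzRingType) (C : lalgType R)
    (homC : bool -> pred C) :=
  [/\ is_grading homC,
      homC false 1,
      forall a b f g, homC a f -> homC b g -> homC (addb a b) (f * g)
    & forall a b f g, homC a f -> homC b g -> f * g = ksign a b * (g * f)].

Definition is_graded_module (R : pzRingType) (C : lalgType R) (S : lmodType R)
    (homC : bool -> pred C) (homS : bool -> pred S) (act : C -> S -> S) :=
  [/\ is_grading homS,
      [/\ forall f s t, act f (s + t) = act f s + act f t,
          forall f g s, act (f + g) s = act f s + act g s
        & forall (r : R) f s, act (r *: f) s = r *: act f s /\ act f (r *: s) = r *: act f s],
      forall f g s, act (f * g) s = act f (act g s),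
      forall s, act 1 s = s
    & forall a b f s, homC a f -> homS b s -> homS (addb a b) (act f s)].

(* a vector field on M: an R-linear graded derivation of C of parity a *)
Definition is_vector_field (R : pzRingType) (C : lalgType R)
    (homC : bool -> pred C) (a : bool) (X : C -> C) :=
  [/\ forall f g, X (f + g) = X f + X g,
      forall (r : R) f, X (r *: f) = r *: X f,
      forall b f, homC b f -> homC (addb a b) (X f)
    & forall b f g, homC b f -> X (f * g) = X f * g + ksign a b * (f * X g)].

Definition is_Lie_algebroid (R : pzRingType) (C : lalgType R) (S : lmodType R)
    (homC : bool -> pred C) (homS : bool -> pred S) (act : C -> S -> S)
    (rho : S -> C -> C) (br : S -> S -> S) :=
  [/\ is_supercomm_algebra homC,
      is_graded_module homC homS act,
      [/\ forall a u, homS a u -> is_vector_field homC a (rho u),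
          forall u v g, rho (u + v) g = rho u g + rho v g,
          forall (r : R) u g, rho (r *: u) g = r *: rho u g
        & forall f u g, rho (act f u) g = f * rho u g],
      [/\ forall u v w, br u (v + w) = br u v + br u w,
          forall u v w, br (u + v) w = br u w + br v w
        & forall (r : R) u v, br (r *: u) v = r *: br u v /\ br u (r *: v) = r *: br u v]
    & [/\ forall a b u v, homS a u -> homS b v -> homS (addb a b) (br u v),
          forall a b u v, homS a u -> homS b v -> br u v = - (ksign a b *: br v u),
          forall a d u f v, homS a u -> homC d f ->
            br u (act f v) = act (rho u f) v + ksign a d *: act f (br u v)
        & forall a b u v w, homS a u -> homS b v ->
            br u (br v w) = br (br u v) w + ksign a b *: br v (br u w)]].

Definition is_linear_connection (R : pzRingType) (C : lalgType R) (S : lmodType R)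
    (homC : bool -> pred C) (homS : bool -> pred S) (act : C -> S -> S)
    (rho : S -> C -> C) (nab : S -> S -> S) :=
  [/\ [/\ forall u v w, nab u (v + w) = nab u v + nab u w,
          forall u v w, nab (u + v) w = nab u w + nab v w
        & forall (r : R) u v, nab (r *: u) v = r *: nab u v /\ nab u (r *: v) = r *: nab u v],
      forall a b u v, homS a u -> homS b v -> homS (addb a b) (nab u v),
      forall f u v, nab (act f u) v = act f (nab u v)
    & forall a d u f v, homS a u -> homC d f ->
        nab u (act f v) = act (rho u f) v + ksign a d *: act f (nab u v)].

(* graded commutator [nab1_u, nab2_v] w, for u of parity a and v of parity b *)
Definition conn_comm (R : pzRingType) (S : lmodType R) (nab1 nab2 : S -> S -> S)
    (a b : bool) (u v w : S) : S :=
  nab1 u (nab2 v w) - ksign a b *: nab2 v (nab1 u w).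

Definition curvature (R : pzRingType) (S : lmodType R) (br : S -> S -> S)
    (nab : S -> S -> S) (a b : bool) (u v w : S) : S :=
  conn_comm nab nab a b u v w - nab (br u v) w.

Definition is_flat (R : pzRingType) (S : lmodType R) (homS : bool -> pred S)
    (br : S -> S -> S) (nab : S -> S -> S) :=
  forall a b u v w, homS a u -> homS b v -> curvature br nab a b u v w = 0.

Definition conn_triple (R : pzRingType) (S : lmodType R)
    (nab1 nab2 nab3 : S -> S -> S) : S -> S -> S :=
  fun u v => nab1 u v - nab2 u v + nab3 u v.

(* the family (nabla^(1), nabla^(2), nabla^(3)) indexed by 'I_3 = {0,1,2} *)
Definition conn_fam (R : pzRingType) (S : lmodType R)
    (nab1 nab2 nab3 : S -> S -> S) (i : 'I_3) : S -> S -> S :=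
  match nat_of_ord i with 0 => nab1 | 1 => nab2 | _ => nab3 end.

(* Main.v *)
Require Import Defs.
From HB Require Import structures.
From mathcomp Require Import all_boot all_order all_algebra.
From mathcomp Require Import reals.
Import GRing.Theory Num.Theory.
Local Open Scope ring_scope.

Lemma nab_sum (R : pzRingType) (S : lmodType R) (nab : S -> S -> S) u
  (Hadd : forall u v w, nab u (v + w) = nab u v + nab u w)
  (I : Type) (r : seq I) (P : pred I) (F : I -> S) :
  nab u (\sum_(i <- r | P i) F i) = \sum_(i <- r | P i) nab u (F i).
Proof.
apply: (big_morph (nab u)) => //.
by apply/(addrI (nab u 0)); rewrite -Hadd !addr0.
Qed.

Lemma zmod_fin (R : pzRingType) (S : lmodType R) (x1 x2 x3 : S) :
  x1 + x2 + x3 - (x1 - x2 + x3) = 2%:R *: x2.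
Proof.
by rewrite scaler_nat mulr2n (addrAC x1 (-x2) x3) (addrAC x1 x2 x3) opprB addrC -addrA (addrC (x1 + x3)) subrK.
Qed.

Lemma zmod_sh (R : pzRingType) (S : lmodType R) (x t d : S) :
  x - t = d - t + (x - d).
Proof. by rewrite [RHS]addrC addrA subrK. Qed.

Theorem mainTheorem5 (R : realType) (C : lalgType R) (S : lmodType R)
    (homC : bool -> pred C) (homS : bool -> pred S) (act : C -> S -> S)
    (rho : S -> C -> C) (br : S -> S -> S) (nab1 nab2 nab3 : S -> S -> S) :
  is_Lie_algebroid homC homS act rho br ->
  is_linear_connection homC homS act rho nab1 ->
  is_linear_connection homC homS act rho nab2 ->
  is_linear_connection homC homS act rho nab3 ->
  is_flat homS br nab1 -> is_flat homS br nab2 -> is_flat homS br nab3 ->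
  forall (a b : bool) (u v w : S), homS a u -> homS b v ->
    curvature br (conn_triple nab1 nab2 nab3) a b u v w =
      2%:R *: nab2 (br u v) w
      + \sum_(i < 3) \sum_(j < 3 | i != j)
          ((-1) ^+ (i + j)%N : R) *:
            conn_comm (conn_fam nab1 nab2 nab3 i) (conn_fam nab1 nab2 nab3 j) a b u v w.
Proof.
move=> _ [[A1 _ Z1] _ _ _] [[A2 _ Z2] _ _ _] [[A3 _ Z3] _ _ _] F1 F2 F3 a b u v w ha hb.
set Nf := conn_fam nab1 nab2 nab3.
set e := fun i : 'I_3 => ((-1) ^+ i : R).
have Aall : forall i x y z, Nf i x (y + z) = Nf i x y + Nf i x z.
  by move=> [[|[|[|//]]] ?] /=; rewrite /Nf /conn_fam /=.
have Zall : forall i x (r : R) y, Nf i x (r *: y) = r *: Nf i x y.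
  move=> [[|[|[|//]]] ?] x r y; rewrite /Nf /conn_fam /=.
  - by case: (Z1 r x y).
  - by case: (Z2 r x y).
  - by case: (Z3 r x y).
have Fall : forall i, conn_comm (Nf i) (Nf i) a b u v w = Nf i (br u v) w.
  move=> [[|[|[|//]]] ?]; rewrite /Nf /conn_fam /=; apply/eqP; rewrite -subr_eq0.
  - by apply/eqP; apply: F1 ha hb.
  - by apply/eqP; apply: F2 ha hb.
  - by apply/eqP; apply: F3 ha hb.
have NE : forall x y, conn_triple nab1 nab2 nab3 x y = \sum_(i < 3) e i *: Nf i x y.
  move=> x y; rewrite !big_ord_recl big_ord0 /e /Nf /conn_fam /= /conn_triple.
  rewrite expr0 expr1 scale1r scaleN1r addr0.
  by rewrite /bump /= sqrrN expr1n scale1r addrA.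
have NN : forall x y z, conn_triple nab1 nab2 nab3 x (conn_triple nab1 nab2 nab3 y z)
    = \sum_(i < 3) \sum_(j < 3) (e i * e j) *: Nf i x (Nf j y z).
  move=> x y z; rewrite NE; apply: eq_bigr => i _; rewrite NE.
  rewrite (@nab_sum _ _ _ _ (Aall i)) scaler_sumr; apply: eq_bigr => j _.
  by rewrite Zall scalerA.
have Eexp : forall i j : 'I_3, ((-1) ^+ (i + j)%N : R) = e i * e j.
  by move=> i j; rewrite /e exprD.
rewrite /curvature {1}/conn_comm !NN [X in ksign a b *: X]exchange_big /=.
have -> : \sum_(i < 3) \sum_(j < 3 | i != j) ((-1) ^+ (i + j)%N : R) *:
            conn_comm (Nf i) (Nf j) a b u v w =
          \sum_(i < 3) \sum_(j < 3) (e i * e j) *: conn_comm (Nf i) (Nf j) a b u v w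
          - \sum_(i < 3) Nf i (br u v) w.
  rewrite -sumrB; apply: eq_bigr => i _.
  rewrite [X in _ = X - _](bigD1 i) //= Fall.
  have -> : e i * e i = 1 by rewrite /e -exprD addnn -mul2n exprM sqrrN !expr1n.
  rewrite scale1r addrC addrK; apply: eq_big => j; first by rewrite eq_sym.
  by rewrite Eexp.
have -> : \sum_(i < 3) \sum_(j < 3) (e i * e j) *: conn_comm (Nf i) (Nf j) a b u v w
   = \sum_(i < 3) \sum_(j < 3) (e i * e j) *: Nf i u (Nf j v w)
     - ksign a b *: \sum_(i < 3) \sum_(j < 3) (e j * e i) *: Nf j v (Nf i u w).
  rewrite scaler_sumr -sumrB; apply: eq_bigr => i _.
  rewrite scaler_sumr -sumrB; apply: eq_bigr => j _.
  by rewrite /conn_comm scalerBr !scalerA [ksign a b * _]mulrC (mulrC (e j)).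
have -> : \sum_(i < 3) Nf i (br u v) w = nab1 (br u v) w + nab2 (br u v) w + nab3 (br u v) w.
  by rewrite !big_ord_recl big_ord0 /Nf /conn_fam /= addr0 addrA.
rewrite -(@zmod_fin _ _ (nab1 (br u v) w) _ (nab3 (br u v) w)) /conn_triple.
exact: zmod_sh.
Qed.
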